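(* Let $\mathcal M=(\mathbf M^{(\lambda)})_{\lambda>0}$ be a weight matrix on $\mathbb N_0^d$. (i) If for every $\lambda>0$ there exist $0<\kappa\le\lambda$ and $A\ge1$ with $M^{(\kappa)}_{\alpha+e_j}\le A^{|\alpha|+1}M^{(\lambda)}_\alpha$ for all $\alpha\in\mathbb N_0^d$, $1\le j\le d$, then for every $\lambda>0$ and $N\in\mathbb N$ there exist $0<\kappa\le\lambda$ and $A,B\ge1$ such that $$\omega_{\mathbf M^{(\lambda)}}(t)+N\log|t|\le\omega_{\mathbf M^{(\kappa)}}(At)+B\quad\text{for all }t\in\mathbb R^d\setminus\{0\}.$$ (ii) If for every $\lambda>0$ there exist $\kappa\ge\lambda$ and $A\ge1$ with $M^{(\lambda)}_{\alpha+e_j}\le A^{|\alpha|+1}M^{(\kappa)}_\alpha$ for all $\alpha\in\mathbb N_0^d$, $1\le j\le d$, then for every $\lambda>0$ and $N\in\mathbb N$ there exist $\kappa\ge\lambda$ and $A,B\ge1$ such that $$\omega_{\mathbf M^{(\kappa)}}(t)+N\log|t|\le\omega_{\mathbf M^{(\lambda)}}(At)+B\quad\text{for all }t\in\mathbb R^d\setminus\{0\}.$$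
   Context: A weight matrix is a family $\mathcal M=(\mathbf M^{(\lambda)})_{\lambda>0}$ with $\mathbf M^{(\lambda)}=(M^{(\lambda)}_\alpha)_{\alpha\in\mathbb N_0^d}$ sequences of positive reals, $M^{(\lambda)}_0=1$, and $M^{(\lambda)}_\alpha\le M^{(\kappa)}_\alpha$ for all $\alpha$ whenever $0<\lambda\le\kappa$. $e_j$ is the $j$-th unit vector, $|\alpha|=\sum\alpha_j$, $|t|$ the Euclidean norm. The associated weight function of $\mathbf M=(M_\alpha)$ is $\omega_{\mathbf M}(t)=\sup_{\alpha\in\mathbb N^d_{0,t}}\log\frac{|t^\alpha|}{M_\alpha}$ ($t\in\mathbb R^d$, possibly $+\infty$), where $\mathbb N^d_{0,t}=\{\alpha:\alpha_j=0\text{ whenever }t_j=0\}$ and $0^0:=1$. *)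

(* Defs.v *)
From mathcomp Require Import all_boot all_order all_algebra.
From mathcomp Require Import all_classical all_reals all_analysis.
Set Implicit Arguments. Unset Strict Implicit. Unset Printing Implicit Defensive.
Import Order.TTheory GRing.Theory Num.Theory.
Local Open Scope ring_scope.
Local Open Scope classical_set_scope.

Definition mindex (d : nat) := 'I_d -> nat.

Definition mlen (d : nat) (a : mindex d) : nat := (\sum_(j < d) a j)%N.

Definition madd_e (d : nat) (a : mindex d) (j : 'I_d) : mindex d :=
  fun i => if i == j then (a i).+1 else a i.

(* t^alpha = prod_j t_j^{alpha_j} (with 0^0 = 1) *)
Definition mpow (R : realType) (d : nat) (t : 'I_d -> R) (a : mindex d) : R :=
  \prod_(j < d) t j ^+ a j.

Definition enorm (R : realType) (d : nat) (t : 'I_d -> R) : R :=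
  Num.sqrt (\sum_(j < d) t j ^+ 2).

Definition dilate (R : realType) (d : nat) (A : R) (t : 'I_d -> R) : 'I_d -> R :=
  fun j => A * t j.

Definition adm (R : realType) (d : nat) (t : 'I_d -> R) (a : mindex d) : Prop :=
  forall j, t j = 0 -> a j = 0%N.

Definition weight_matrix (R : realType) (d : nat) (M : R -> mindex d -> R) : Prop :=
  (forall lam, 0 < lam -> forall a, 0 < M lam a) /\
  (forall lam, 0 < lam -> M lam (fun _ => 0%N) = 1) /\
  (forall lam kap, 0 < lam -> lam <= kap -> forall a, M lam a <= M kap a).

Definition omegaM (R : realType) (d : nat) (Mseq : mindex d -> R) (t : 'I_d -> R)
  : \bar R :=
  ereal_sup [set ((ln (`|mpow t a| / Mseq a))%:E) | a in adm t].

(* Main.v *)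
Require Import Defs.
From mathcomp Require Import all_boot all_order all_algebra.
From mathcomp Require Import all_classical all_reals all_analysis.
From mathcomp Require Import ring lra.
Import Order.TTheory GRing.Theory Num.Theory.
Local Open Scope ring_scope.

Section H.
Variable R : realType.
Variable d : nat.

Lemma mlen_madd_e (a : mindex d) (j : 'I_d) : mlen (madd_e a j) = (mlen a).+1.
Proof.
rewrite /mlen (bigD1 j) //= [in RHS](bigD1 j) //= /madd_e eqxx addSn; congr (_.+1 + _)%N.
by apply: eq_bigr => i /negPf ->.
Qed.

Lemma mlen_iter n (a : mindex d) (j : 'I_d) : mlen (iter n (fun b => madd_e b j) a) = (mlen a + n)%N.
Proof. by elim: n => [|n IH]; rewrite ?addn0 //= mlen_madd_e IH addnS. Qed.

Lemma mpow_madd_e (t : 'I_d -> R) a j : mpow t (madd_e a j) = mpow t a * t j.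
Proof.
rewrite /mpow (bigD1 j) //= [in RHS](bigD1 j) //= /madd_e eqxx exprS.
rewrite [t j * _]mulrC -!mulrA; congr (_ * _); rewrite mulrC; congr (_ * _).
by apply: eq_bigr => i /negPf ->.
Qed.

Lemma mpow_iter n (t : 'I_d -> R) a j :
  mpow t (iter n (fun b => madd_e b j) a) = mpow t a * t j ^+ n.
Proof. by elim: n => [|n IH]; rewrite ?mulr1 //= mpow_madd_e IH exprS -mulrA [t j * _]mulrC. Qed.

Lemma mpow_dilate (C : R) (t : 'I_d -> R) a : mpow (dilate C t) a = C ^+ mlen a * mpow t a.
Proof.
by rewrite /mpow /dilate /mlen -prodrXr -big_split /=; apply: eq_bigr => i _; rewrite exprMn.
Qed.

Lemma adm_iter n (t : 'I_d -> R) a j : t j != 0 -> adm t a ->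
  adm t (iter n (fun b => madd_e b j) a).
Proof.
move=> tj; elim: n => [//|n IH] /= /IH h i ti; rewrite /madd_e.
case: eqP => [eij|]; last by move=> _; exact: h.
by move: tj; rewrite -eij ti eqxx.
Qed.

Lemma adm_dilate (C : R) (t : 'I_d -> R) a : C != 0 -> adm t a -> adm (dilate C t) a.
Proof. by move=> C0 h i /eqP; rewrite /dilate mulf_eq0 (negPf C0) /= => /eqP /h. Qed.

Lemma mpow_neq0 (t : 'I_d -> R) a : adm t a -> mpow t a != 0.
Proof.
move=> h; rewrite /mpow; apply/prodf_neq0 => i _.
have [ti|ti] := eqVneq (t i) 0; first by rewrite (h i ti) expr0 oner_neq0.
by rewrite expf_neq0.
Qed.

Lemma pick_max (t : 'I_d -> R) : t <> (fun _ => 0) ->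
  exists j, (forall i, `|t i| <= `|t j|) /\ t j != 0.
Proof.
move=> t0.
have [i0 ti0] : exists i, t i != 0.
  case: (pselect (exists i, t i != 0)) => [//|nex]; exfalso; apply: t0.
  apply/funext => i; apply/eqP; apply/negPn/negP => h; by apply nex; exists i.
case: (@arg_maxP _ _ _ i0 xpredT (fun i => `|t i|) isT) => j _ jmax.
exists j; split; first by move=> i; exact: jmax.
rewrite -normr_gt0; apply: lt_le_trans (jmax i0 isT); by rewrite normr_gt0.
Qed.

Lemma enorm_bound (t : 'I_d -> R) j : (forall i, `|t i| <= `|t j|) -> t j != 0 ->
  0 < enorm t /\ enorm t <= (d.+1)%:R * `|t j|.
Proof.
move=> jmax tj; rewrite /enorm; split.
  rewrite sqrtr_gt0 (bigD1 j) //=; apply: (@lt_le_trans _ _ (t j ^+ 2)).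
    by rewrite -real_normK ?num_real // exprn_gt0 // normr_gt0.
  by rewrite lerDl; apply: sumr_ge0 => i _; rewrite sqr_ge0.
have h0 : 0 <= d.+1%:R * `|t j| by rewrite mulr_ge0.
rewrite -(ger0_norm h0) -sqrtr_sqr ler_sqrt ?sqr_ge0 //.
have -> : (d.+1%:R * `|t j|) ^+ 2 = (d.+1%:R ^+ 2) * `|t j| ^+ 2 by rewrite exprMn.
apply: le_trans (_ : \sum_(i < d) `|t j| ^+ 2 <= _).
  apply: ler_sum => i _; rewrite -(real_normK (num_real (t i))) !expr2.
  by apply: ler_pM; rewrite ?normr_ge0 // normr_id.
rewrite sumr_const card_ord -[_ *+ d]mulr_natl.
apply: ler_wpM2r; first exact: sqr_ge0.
by rewrite -natrX ler_nat expnS expn1 (leq_trans (leqnSn d)) // leq_pmulr.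
Qed.


Lemma core (Mo Ms : mindex d -> R) (C : R) (N : nat) :
  (forall a, 0 < Mo a) -> (forall a, 0 < Ms a) -> 1 <= C ->
  (forall a (j : 'I_d), Ms (iter N (fun b => madd_e b j) a) <= C ^+ (mlen a).+1 * Mo a) ->
  forall t : 'I_d -> R, t <> (fun _ => 0) ->
  (omegaM Mo t + (N%:R * ln (enorm t))%:E
     <= omegaM Ms (dilate C t) + (1 + ln C + N%:R * ln (d.+1)%:R)%:E)%E.
Proof.
move=> Mo0 Ms0 C1 HM t t0.
have C0 : 0 < C by apply: lt_le_trans C1.
have [j [jmax tj]] := @pick_max t t0.
have [en0 enle] := @enorm_bound t j jmax tj.
have tj0 : 0 < `|t j| by rewrite normr_gt0.
have lnen : ln (enorm t) <= ln (d.+1)%:R + ln `|t j|.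
  rewrite -lnM ?posrE ?ltr0Sn // ler_ln ?posrE // mulr_gt0 // ltr0Sn.
set B := (1 + ln C + N%:R * ln (d.+1)%:R).
set c := N%:R * ln (enorm t).
set S := omegaM Ms (dilate C t).
suff h : (omegaM Mo t <= S + (B - c)%:E)%E.
  apply: le_trans (leeD2r c%:E h) _.
  by rewrite -addeA -EFinD subrK.
apply: ge_ereal_sup => _ [a ha <-].
set b := iter N (fun b => madd_e b j) a.
have hb : adm (dilate C t) b by apply: adm_dilate; rewrite ?gt_eqF //; exact: adm_iter.
have Sle : ((ln (`|mpow (dilate C t) b| / Ms b))%:E <= S)%E.
  by apply: ereal_sup_ubound; exists b.
apply: le_trans (leeD2r _ Sle); rewrite -EFinD lee_fin.
set p := `|mpow t a|; set m := Mo a; set q := `|mpow (dilate C t) b|; set s := Ms b.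
have p0 : 0 < p by rewrite normr_gt0 mpow_neq0.
have m0 : 0 < m := Mo0 a.
have s0 : 0 < s := Ms0 b.
have tN : 0 < `|t j| ^+ N by rewrite exprn_gt0.
have qE : q = C ^+ mlen a * C ^+ N * p * `|t j| ^+ N.
  rewrite /q mpow_dilate mlen_iter mpow_iter !normrM normrX ger0_norm ?exprn_ge0 ?ltW //.
  by rewrite exprD normrX !mulrA.
set X := p / m * `|t j| ^+ N / C.
have X0 : 0 < X by rewrite /X divr_gt0 // mulr_gt0 // divr_gt0.
have Xle : X <= q / s.
  rewrite ler_pdivlMr //; apply: le_trans (_ : X * (C ^+ (mlen a).+1 * m) <= _).
    by apply: ler_wpM2l; [exact: ltW | exact: HM].
  have -> : X * (C ^+ (mlen a).+1 * m) = C ^+ mlen a * p * `|t j| ^+ N.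
    rewrite /X exprS; field; rewrite ?gt_eqF //.
  rewrite qE -!mulrA; apply: ler_wpM2l; first by rewrite exprn_ge0 ?ltW.
  by rewrite ler_peMl ?exprn_ege1 // mulr_ge0 ?ltW.
have lnX : ln X = ln (p / m) + N%:R * ln `|t j| - ln C.
  rewrite /X lnM ?posrE ?(mulr_gt0, divr_gt0, invr_gt0) // lnV ?posrE //.
  by rewrite lnM ?posrE ?divr_gt0 // lnXn // mulr_natl.
have q0 : 0 < q by rewrite qE !mulr_gt0 ?exprn_gt0.
have qs0 : 0 < q / s by rewrite divr_gt0.
have lnq : ln X <= ln (q / s) by rewrite ler_ln ?posrE.
have Nen : c <= N%:R * (ln (d.+1)%:R + ln `|t j|) by rewrite /c ler_wpM2l.
rewrite /B; move: Nen lnq; rewrite lnX mulrDr; lra.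
Qed.
End H.

Lemma exp_step (R : realType) (A C x y : R) (k N : nat) : 1 <= A -> 1 <= C -> 0 <= y -> x <= C ^+ k.+1 * y ->
  A ^+ (k + N).+1 * x <= (A ^+ N.+1 * C) ^+ k.+1 * y.
Proof.
move=> A1 C1 y0 hx.
have A0 : 0 <= A by apply: le_trans A1.
have C0 : 0 <= C by apply: le_trans C1.
apply: le_trans (ler_wpM2l (exprn_ge0 _ A0) hx) _.
rewrite exprMn -exprM mulrA; apply: ler_wpM2r => //; apply: ler_wpM2r; first exact: exprn_ge0.
apply: ler_weXn2l => //; rewrite mulSn addSn ltnS leq_add2l.
by rewrite leq_pmulr.
Qed.

Lemma iter1 (R : realType) (d : nat) (M : R -> mindex d -> R) : weight_matrix M ->
  (forall lam, 0 < lam -> exists (kap A : R), 0 < kap /\ kap <= lam /\ 1 <= A /\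
       forall (a : mindex d) (j : 'I_d),
         M kap (madd_e a j) <= A ^+ (mlen a).+1 * M lam a) ->
  forall N lam, 0 < lam -> exists (kap C : R), 0 < kap /\ kap <= lam /\ 1 <= C /\
       forall (a : mindex d) (j : 'I_d),
         M kap (iter N (fun b => madd_e b j) a) <= C ^+ (mlen a).+1 * M lam a.
Proof.
move=> [Mpos _] H; elim=> [|N IH] lam l0.
  exists lam, 1; do 3!split => //; move=> a j /=; by rewrite expr1n mul1r.
have [k [C [k0 [kl [C1 hC]]]]] := IH lam l0.
have [k' [A [k'0 [k'k [A1 hA]]]]] := H k k0.
exists k', (A ^+ N.+1 * C); split; first exact: k'0.
split; first exact: le_trans k'k kl.
split; first by rewrite mulr_ege1 // exprn_ege1.
move=> a j /=; apply: le_trans (hA _ j) _; rewrite mlen_iter.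
apply: exp_step => //.
exact: ltW (Mpos _ l0 a).
Qed.

Lemma iter2 (R : realType) (d : nat) (M : R -> mindex d -> R) : weight_matrix M ->
  (forall lam, 0 < lam -> exists (kap A : R), lam <= kap /\ 1 <= A /\
       forall (a : mindex d) (j : 'I_d),
         M lam (madd_e a j) <= A ^+ (mlen a).+1 * M kap a) ->
  forall N lam, 0 < lam -> exists (kap C : R), lam <= kap /\ 1 <= C /\
       forall (a : mindex d) (j : 'I_d),
         M lam (iter N (fun b => madd_e b j) a) <= C ^+ (mlen a).+1 * M kap a.
Proof.
move=> [Mpos _] H; elim=> [|N IH] lam l0.
  exists lam, 1; do 2!split => //; move=> a j /=; by rewrite expr1n mul1r.
have [k1 [A [lk1 [A1 hA]]]] := H lam l0.
have k10 : 0 < k1 by apply: lt_le_trans lk1.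
have [k [C [k1k [C1 hC]]]] := IH k1 k10.
exists k, (A ^+ N.+1 * C); split; first exact: le_trans lk1 k1k.
split; first by rewrite mulr_ege1 // exprn_ege1.
move=> a j /=; apply: le_trans (hA _ j) _; rewrite mlen_iter.
apply: exp_step => //.
exact: ltW (Mpos _ (lt_le_trans l0 (le_trans lk1 k1k)) a).
Qed.

Theorem lemma3p3 (R : realType) (d : nat) (M : R -> mindex d -> R) :
  weight_matrix M ->
  ((forall lam, 0 < lam -> exists (kap A : R), 0 < kap /\ kap <= lam /\ 1 <= A /\
       forall (a : mindex d) (j : 'I_d),
         M kap (madd_e a j) <= A ^+ (mlen a).+1 * M lam a) ->
   forall lam (N : nat), 0 < lam -> exists (kap A B : R),
     0 < kap /\ kap <= lam /\ 1 <= A /\ 1 <= B /\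
     forall t : 'I_d -> R, t <> (fun _ => 0) ->
       (omegaM (M lam) t + (N%:R * ln (enorm t))%:E
          <= omegaM (M kap) (dilate A t) + B%:E)%E)
  /\
  ((forall lam, 0 < lam -> exists (kap A : R), lam <= kap /\ 1 <= A /\
       forall (a : mindex d) (j : 'I_d),
         M lam (madd_e a j) <= A ^+ (mlen a).+1 * M kap a) ->
   forall lam (N : nat), 0 < lam -> exists (kap A B : R),
     lam <= kap /\ 1 <= A /\ 1 <= B /\
     forall t : 'I_d -> R, t <> (fun _ => 0) ->
       (omegaM (M kap) t + (N%:R * ln (enorm t))%:E
          <= omegaM (M lam) (dilate A t) + B%:E)%E).
Proof.
move=> Hw; have Mpos := Hw.1.
have B1 : forall C : R, forall N : nat, 1 <= C -> 1 <= 1 + ln C + N%:R * ln (d.+1)%:R.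
  move=> C N C1; rewrite -addrA lerDl addr_ge0 ?ln_ge0 // mulr_ge0 ?ln_ge0 //.
  by rewrite ler1n.
split => Hyp lam N l0.
  have [k [C [k0 [kl [C1 hC]]]]] := @iter1 R d M Hw Hyp N lam l0.
  exists k, C, (1 + ln C + N%:R * ln (d.+1)%:R); do 4!split => //; first exact: B1.
  by apply: core => //; [exact: Mpos | exact: Mpos].
have [k [C [lk [C1 hC]]]] := @iter2 R d M Hw Hyp N lam l0.
have k0 : 0 < k by apply: lt_le_trans lk.
exists k, C, (1 + ln C + N%:R * ln (d.+1)%:R); do 3!split => //; first exact: B1.
by apply: core => //; [exact: Mpos | exact: Mpos].
Qed.
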